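(* For every countable poset $P$, the space $\mathrm{UF}(P)$ is quasi-Polish, i.e. it is separable and admits a compatible Smyth-complete quasi-metric.
   Context: A filter on a poset $(P,\le_P)$ is an upward closed subset in which any two elements have a common lower bound in the set; it is unbounded if no $r\in P$ satisfies $r<_P p$ for all $p$ in it. $\mathrm{UF}(P)$ is the set of unbounded filters with topology generated by $N_p=\{F:p\in F\}$. A quasi-metric on $X$ is $d:X\times X\to[0,\infty)$ with $d(x,y)=d(y,x)=0\Rightarrow x=y$ and the triangle inequality; its topology has basis the balls $\{y:d(x,y)<r\}$. A sequence $(a_n)$ is left-Cauchy if $\forall\varepsilon>0\,\exists N\,\forall m>n>N\ d(a_n,a_m)<\varepsilon$; $(X,d)$ is Smyth-complete if every left-Cauchy sequence converges to some $a$ in the sense $d(a,a_n)\to0$ and $d(a_n,a)\to0$. *)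

(* Defs.v *)
From Stdlib Require Import Reals.
Open Scope R_scope.

Definition is_poset {P : Type} (le : P -> P -> Prop) : Prop :=
  (forall x, le x x) /\
  (forall x y, le x y -> le y x -> x = y) /\
  (forall x y z, le x y -> le y z -> le x z).

Definition lt_of {P : Type} (le : P -> P -> Prop) (r p : P) : Prop :=
  le r p /\ r <> p.

Definition countable_type (X : Type) : Prop :=
  exists f : X -> nat, forall x y, f x = f y -> x = y.

Definition countable_set {X : Type} (D : X -> Prop) : Prop :=
  exists f : X -> nat, forall x y, D x -> D y -> f x = f y -> x = y.

Definition is_filter {P : Type} (le : P -> P -> Prop) (F : P -> Prop) : Prop :=
  (forall p q, F p -> le p q -> F q) /\
  (forall p q, F p -> F q -> exists r, F r /\ le r p /\ le r q).

Definition unbounded {P : Type} (le : P -> P -> Prop) (F : P -> Prop) : Prop :=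
  ~ (exists r, forall p, F p -> lt_of le r p).

Definition unbounded_filter {P : Type} (le : P -> P -> Prop) (F : P -> Prop) : Prop :=
  is_filter le F /\ unbounded le F.

Definition UF {P : Type} (le : P -> P -> Prop) : Type :=
  { F : P -> Prop | unbounded_filter le F }.

Definition N_set {P : Type} (le : P -> P -> Prop) (p : P) : UF le -> Prop :=
  fun F => proj1_sig F p.

Definition generated_open {X I : Type} (S : I -> X -> Prop) (U : X -> Prop) : Prop :=
  forall x, U x -> exists l : list I,
    (forall i, List.In i l -> S i x) /\
    (forall y, (forall i, List.In i l -> S i y) -> U y).

Definition UF_open {P : Type} (le : P -> P -> Prop) : (UF le -> Prop) -> Prop :=
  generated_open (N_set le).

Definition is_quasi_metric {X : Type} (d : X -> X -> R) : Prop :=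
  (forall x y, 0 <= d x y) /\
  (forall x, d x x = 0) /\
  (forall x y, d x y = 0 -> d y x = 0 -> x = y) /\
  (forall x y z, d x z <= d x y + d y z).

Definition qball {X : Type} (d : X -> X -> R) (x : X) (r : R) : X -> Prop :=
  fun y => d x y < r.

Definition qm_open {X : Type} (d : X -> X -> R) (U : X -> Prop) : Prop :=
  forall y, U y -> exists x r, qball d x r y /\ (forall z, qball d x r z -> U z).

Definition left_Cauchy {X : Type} (d : X -> X -> R) (a : nat -> X) : Prop :=
  forall eps, 0 < eps -> exists N : nat, forall m n : nat,
    (N < n)%nat -> (n < m)%nat -> d (a n) (a m) < eps.

Definition seq_to_zero (u : nat -> R) : Prop :=
  forall eps, 0 < eps -> exists N : nat, forall n : nat, (N <= n)%nat -> Rabs (u n) < eps.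

Definition smyth_complete {X : Type} (d : X -> X -> R) : Prop :=
  forall a : nat -> X, left_Cauchy d a ->
    exists x : X, seq_to_zero (fun n => d x (a n)) /\ seq_to_zero (fun n => d (a n) x).

Definition separable {X : Type} (open : (X -> Prop) -> Prop) : Prop :=
  exists D : X -> Prop, countable_set D /\
    (forall U, open U -> (exists x, U x) -> exists x, U x /\ D x).

Definition quasi_Polish {X : Type} (open : (X -> Prop) -> Prop) : Prop :=
  separable open /\
  exists d : X -> X -> R, is_quasi_metric d /\
    (forall U, open U <-> qm_open d U) /\ smyth_complete d.

(* Main.v *)
Require Import Defs.
From Stdlib Require Import Reals.
From Stdlib Require Import Classical ClassicalEpsilon FunctionalExtensionality PropExtensionality ProofIrrelevance Lia Lra Cantor List.

Open Scope R_scope.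

Definition wt (n : nat) : R := / 2 ^ n.

Lemma wt_pos n : 0 < wt n.
Proof. unfold wt. apply Rinv_0_lt_compat, pow_lt; lra. Qed.

Lemma wt_lt k n : (k < n)%nat -> wt n < wt k.
Proof.
  intros H. unfold wt. apply Rinv_lt_contravar.
  apply Rmult_lt_0_compat; apply pow_lt; lra.
  apply Rlt_pow; [lra | exact H].
Qed.

Lemma wt_le k n : (k <= n)%nat -> wt n <= wt k.
Proof.
  intros H. destruct (Nat.eq_dec k n); [subst; lra|].
  apply Rlt_le, wt_lt; lia.
Qed.

Lemma wt_small eps : 0 < eps -> exists K, wt K < eps.
Proof.
  intros He. destruct (pow_lt_1_zero (/2)) with (y:=eps) as [N HN].
  rewrite Rabs_pos_eq; lra. exact He.
  exists N. specialize (HN N (le_n N)). unfold wt. rewrite <- pow_inv.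
  rewrite Rabs_pos_eq in HN; auto. apply pow_le; lra.
Qed.

Lemma exists_least (Q : nat -> Prop) : (exists n, Q n) -> exists n, Q n /\ forall m, Q m -> (n <= m)%nat.
Proof.
  intros [n Hn]. revert Hn. induction n as [n IH] using (well_founded_induction Wf_nat.lt_wf).
  intros Hn. destruct (classic (exists m, (m < n)%nat /\ Q m)) as [[m [Hm Qm]]|H].
  - exact (IH m Hm Qm).
  - exists n; split; auto. intros m Qm. destruct (Nat.lt_ge_cases m n); auto. exfalso; eauto.
Qed.

Lemma min_witness {P : Type} (f : P -> nat) (A : P -> Prop) :
  (exists s, A s) -> exists s, A s /\ forall s', A s' -> (f s <= f s')%nat.
Proof.
  intros [s Hs].
  destruct (exists_least (fun n => exists s, A s /\ f s = n)) as [n [[s0 [As0 e]] Hmin]]; eauto.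
  exists s0. split; auto. intros s' As'. subst. apply Hmin. eauto.
Qed.

Definition dist {X : Type} (T : nat -> X -> X -> Prop) (x y : X) : R :=
  match excluded_middle_informative (exists n, T n x y) with
  | left H => wt (proj1_sig (constructive_indefinite_description _ (exists_least _ H)))
  | right _ => 0
  end.

Lemma dist_cases {X} (T : nat -> X -> X -> Prop) x y :
  (dist T x y = 0 /\ forall n, ~ T n x y) \/
  exists n, dist T x y = wt n /\ T n x y /\ forall m, T m x y -> (n <= m)%nat.
Proof.
  unfold dist. destruct (excluded_middle_informative _) as [H|H].
  - right. destruct (constructive_indefinite_description _ _) as [n [Tn Hm]]. simpl. eauto.
  - left. split; auto. intros n Tn; apply H; eauto.
Qed.

Lemma dist_lt_iff {X} (T : nat -> X -> X -> Prop) x y k :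
  dist T x y < wt k <-> forall j, (j <= k)%nat -> ~ T j x y.
Proof.
  destruct (dist_cases T x y) as [[-> H]|[n [-> [Tn Hm]]]].
  - split; intros; [apply H | apply wt_pos].
  - split.
    + intros Hlt j Hj Tj. apply Hm in Tj. pose proof (wt_le n k ltac:(lia)). lra.
    + intros H. destruct (Nat.lt_ge_cases k n). apply wt_lt; auto. exfalso; apply (H n); auto.
Qed.

Lemma dist_nonneg {X} (T : nat -> X -> X -> Prop) x y : 0 <= dist T x y.
Proof.
  destruct (dist_cases T x y) as [[-> H]|[n [-> _]]]; [lra | apply Rlt_le, wt_pos].
Qed.

Lemma dist_zero {X} (T : nat -> X -> X -> Prop) x y : dist T x y = 0 -> forall n, ~ T n x y.
Proof.
  destruct (dist_cases T x y) as [[_ H]|[n [-> _]]]; auto.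
  intros E. pose proof (wt_pos n). lra.
Qed.

Lemma dist_refl {X} (T : nat -> X -> X -> Prop) x : (forall n, ~ T n x x) -> dist T x x = 0.
Proof.
  intros H. destruct (dist_cases T x x) as [[-> _]|[n [_ [Tn _]]]]; auto. exfalso; eapply H; eauto.
Qed.

Lemma dist_triangle {X} (T : nat -> X -> X -> Prop) :
  (forall n x y z, T n x z -> T n x y \/ T n y z) ->
  forall x y z, dist T x z <= dist T x y + dist T y z.
Proof.
  intros Htr x y z. pose proof (dist_nonneg T x y). pose proof (dist_nonneg T y z).
  destruct (dist_cases T x z) as [[-> _]|[n [-> [Tn _]]]]. lra.
  destruct (Htr _ _ y _ Tn) as [H1|H1].
  - assert (~ dist T x y < wt n) by (rewrite dist_lt_iff; intros Hn; apply (Hn n); auto). lra.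
  - assert (~ dist T y z < wt n) by (rewrite dist_lt_iff; intros Hn; apply (Hn n); auto). lra.
Qed.

Definition cond {P : Type} (f : P -> nat) (Q : P -> Prop) (F G : P -> Prop) : Prop :=
  exists s, F s /\ Q s /\ forall s', G s' -> Q s' -> (f s < f s')%nat.

Lemma cond_split {P} (f : P -> nat) Q F G H :
  cond f Q F H -> cond f Q F G \/ cond f Q G H.
Proof.
  intros [s [Fs [Qs Hs]]].
  destruct (classic (exists s', G s' /\ Q s' /\ (f s' <= f s)%nat)) as [[s' [Gs' [Qs' Hle]]]|Hn].
  - right. exists s'. repeat split; auto. intros s'' Hs'' Qs''. specialize (Hs s'' Hs'' Qs''). lia.
  - left. exists s. repeat split; auto. intros s' Gs' Qs'.
    destruct (Nat.lt_ge_cases (f s) (f s')); auto. exfalso; apply Hn; eauto.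
Qed.

Lemma cond_irrefl {P} (f : P -> nat) Q F : ~ cond f Q F F.
Proof. intros [s [Fs [Qs Hs]]]. specialize (Hs s Fs Qs). lia. Qed.

Lemma not_cond_intro {P} (f : P -> nat) Q F G :
  (forall s, F s -> Q s -> exists s', G s' /\ Q s' /\ (f s' <= f s)%nat) -> ~ cond f Q F G.
Proof.
  intros H [s [Fs [Qs Hs]]]. destruct (H s Fs Qs) as [s' [Gs' [Qs' Hle]]].
  specialize (Hs s' Gs' Qs'). lia.
Qed.

Lemma not_cond_elim {P} (f : P -> nat) Q F G s :
  ~ cond f Q F G -> F s -> Q s -> exists s', G s' /\ Q s' /\ (f s' <= f s)%nat.
Proof.
  intros Hc Fs Qs. apply NNPP; intro Hn. apply Hc. exists s; repeat split; auto.
  intros s' Gs' Qs'. destruct (Nat.lt_ge_cases (f s) (f s')); auto. exfalso; apply Hn; eauto.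
Qed.

Inductive cnd (P : Type) := CMem (p : P) | CUnb (r : P) | CPr (p q : P).
Arguments CMem {P}. Arguments CUnb {P}. Arguments CPr {P}.

Definition Qof {P : Type} (le : P -> P -> Prop) (c : cnd P) : P -> Prop :=
  match c with
  | CMem p => fun s => s = p
  | CUnb r => fun s => ~ lt_of le r s
  | CPr p q => fun s => le s p /\ le s q
  end.

Definition code {P : Type} (f : P -> nat) (c : cnd P) : nat :=
  match c with
  | CMem p => 3 * f p
  | CUnb r => 3 * f r + 1
  | CPr p q => 3 * to_nat (f p, f q) + 2
  end%nat.

Lemma code_inj {P} (f : P -> nat) (Hf : forall x y, f x = f y -> x = y) c c' :
  code f c = code f c' -> c = c'.
Proof.
  destruct c, c'; unfold code; intros E; try lia.
  - f_equal; apply Hf; lia.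
  - f_equal; apply Hf; lia.
  - assert (E2 : to_nat (f p, f q) = to_nat (f p0, f q0)) by lia.
    apply (f_equal of_nat) in E2. rewrite !cancel_of_to in E2.
    injection E2; intros; f_equal; apply Hf; auto.
Qed.

Definition Tfam {P : Type} (le : P -> P -> Prop) (f : P -> nat) (n : nat) (F G : UF le) : Prop :=
  exists c, code f c = n /\ cond f (Qof le c) (proj1_sig F) (proj1_sig G).

Lemma Tfam_split {P} le (f : P -> nat) n x y z :
  Tfam le f n x z -> Tfam le f n x y \/ Tfam le f n y z.
Proof.
  intros [c [e Hc]]. destruct (cond_split f _ _ (proj1_sig y) _ Hc); [left|right]; exists c; auto.
Qed.

Lemma Tfam_irrefl {P} le (f : P -> nat) n x : ~ Tfam le f n x x.
Proof. intros [c [_ Hc]]. eapply cond_irrefl; eauto. Qed.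

Lemma Tfam_mem {P} le (f : P -> nat) (x y : UF le) p :
  proj1_sig x p -> ~ proj1_sig y p -> Tfam le f (3 * f p)%nat x y.
Proof.
  intros Hx Hy. exists (CMem p). split; auto. exists p. simpl. repeat split; auto.
  intros s' Hs' ->. contradiction.
Qed.

Lemma UF_eq {P : Type} (le : P -> P -> Prop) (x y : UF le) :
  (forall p, proj1_sig x p <-> proj1_sig y p) -> x = y.
Proof.
  destruct x as [X HX], y as [Y HY]; simpl. intros H.
  assert (X = Y) by (extensionality p; apply propositional_extensionality; auto).
  subst. f_equal. apply proof_irrelevance.
Qed.

Lemma cond_local {P} (f : P -> nat) (Q Y : P -> Prop) :
  exists l, (forall i, In i l -> Y i) /\
    forall Z : P -> Prop, (forall i, In i l -> Z i) -> ~ cond f Q Y Z.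
Proof.
  destruct (classic (exists s, Y s /\ Q s)) as [Hex|Hno].
  - destruct (min_witness f _ Hex) as [s0 [[Ys0 Qs0] Hmin]].
    exists (s0 :: nil). split.
    + intros i [<-|[]]; auto.
    + intros Z HZ. apply not_cond_intro. intros s Ys Qs. exists s0. repeat split; auto.
      apply HZ; left; auto.
  - exists nil. split. intros i []. intros Z _ [s [Ys [Qs _]]]. apply Hno; eauto.
Qed.

Lemma index_local {P} le (f : P -> nat) (Hf : forall x y, f x = f y -> x = y) j (y : UF le) :
  exists l, (forall i, In i l -> proj1_sig y i) /\
    forall z : UF le, (forall i, In i l -> proj1_sig z i) -> ~ Tfam le f j y z.
Proof.
  destruct (classic (exists c, code f c = j)) as [[c Hc]|Hno].
  - destruct (cond_local f (Qof le c) (proj1_sig y)) as [l [H1 H2]].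
    exists l. split; auto. intros z Hz [c' [e' Hc']].
    assert (c' = c) by (apply (code_inj f Hf); congruence). subst c'.
    eapply H2; eauto.
  - exists nil. split. intros i []. intros z _ [c [e _]]. apply Hno; eauto.
Qed.

Lemma nbhd_local {P} le (f : P -> nat) (Hf : forall x y, f x = f y -> x = y) K (y : UF le) :
  exists l, (forall i, In i l -> proj1_sig y i) /\
    forall z : UF le, (forall i, In i l -> proj1_sig z i) ->
      forall j, (j <= K)%nat -> ~ Tfam le f j y z.
Proof.
  induction K as [|K IH].
  - destruct (index_local le f Hf 0 y) as [l [H1 H2]]. exists l. split; auto.
    intros z Hz j Hj. assert (j = 0%nat) by lia. subst. auto.
  - destruct IH as [l1 [H1 H2]]. destruct (index_local le f Hf (S K) y) as [l2 [H3 H4]].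
    exists (l1 ++ l2). split.
    + intros i Hi. apply in_app_iff in Hi. destruct Hi; auto.
    + intros z Hz j Hj. destruct (Nat.eq_dec j (S K)) as [->|Hne].
      * apply H4. intros i Hi. apply Hz. apply in_app_iff; auto.
      * apply H2; [|lia]. intros i Hi. apply Hz. apply in_app_iff; auto.
Qed.

Fixpoint sumf {P} (f : P -> nat) (l : list P) : nat :=
  match l with nil => 0%nat | a :: l => (f a + sumf f l)%nat end.

Lemma sumf_in {P} (f : P -> nat) l p : In p l -> (f p <= sumf f l)%nat.
Proof. induction l; simpl. intros []. intros [H|H]. subst; lia. specialize (IHl H); lia. Qed.

Lemma topo_eq {P : Type} (le : P -> P -> Prop) (f : P -> nat) (Hf : forall x y, f x = f y -> x = y) U :
  UF_open le U <-> qm_open (dist (Tfam le f)) U.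
Proof.
  split.
  - intros HU y Uy. destruct (HU y Uy) as [l [Hl Hsub]].
    exists y, (wt (3 * sumf f l)). split.
    + unfold qball. rewrite dist_refl. apply wt_pos. intros n; apply Tfam_irrefl.
    + intros z Hz. apply Hsub. intros i Hi. unfold qball in Hz. rewrite dist_lt_iff in Hz.
      unfold N_set. apply NNPP; intro Hn.
      apply (Hz (3 * f i)%nat). pose proof (sumf_in f l i Hi). lia.
      apply Tfam_mem; auto. apply Hl; auto.
  - intros HU y Uy. destruct (HU y Uy) as [x [r [Hxy Hball]]]. unfold qball in *.
    destruct (wt_small (r - dist (Tfam le f) x y)) as [K HK]. lra.
    destruct (nbhd_local le f Hf K y) as [l [H1 H2]].
    exists l. split; [exact H1|]. intros z Hz. apply Hball.
    assert (dist (Tfam le f) y z < wt K) by (apply dist_lt_iff; apply H2; exact Hz).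
    pose proof (dist_triangle (Tfam le f) (Tfam_split le f) x y z). lra.
Qed.


Lemma smyth {P : Type} (le : P -> P -> Prop) (f : P -> nat) (Hf : forall x y, f x = f y -> x = y) :
  smyth_complete (dist (Tfam le f)).
Proof.
  intros a Hc.
  set (A := fun n => proj1_sig (a n)).
  assert (Cau : forall K, exists N, forall m n, (N < n)%nat -> (n < m)%nat ->
            forall j, (j <= K)%nat -> ~ Tfam le f j (a n) (a m)).
  { intros K. destruct (Hc (wt K) (wt_pos K)) as [N HN]. exists N.
    intros m n H1 H2. apply dist_lt_iff. apply HN; auto. }
  set (L := fun p => exists n0, forall n, (n0 <= n)%nat -> A n p).
  assert (STAB : forall K, exists N, forall s n, (3 * f s <= K)%nat -> (N < n)%nat -> A n s -> L s).
  { intros K. destruct (Cau K) as [N HN]. exists N. intros s n Hs Hn As.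
    exists (S n). intros m Hm. apply NNPP; intro Hnot.
    apply (HN m n Hn ltac:(lia) (3 * f s)%nat Hs). apply Tfam_mem; auto. }
  assert (GEN : forall c, exists N, forall n, (N < n)%nat ->
            (exists s, A n s /\ Qof le c s) -> exists s, L s /\ Qof le c s).
  { intros c. destruct (Cau (code f c)) as [N1 HN1]. exists N1. intros n Hn Hex.
    destruct (min_witness f _ Hex) as [s0 [[As0 Qs0] Hmin]].
    destruct (STAB (3 * f s0)%nat) as [N2 HN2].
    set (m := S (Nat.max n N2)).
    assert (Hnc : ~ cond f (Qof le c) (A n) (A m)).
    { intros Hcd. apply (HN1 m n Hn ltac:(unfold m; lia) (code f c) (le_n _)).
      exists c. split; auto. }
    destruct (not_cond_elim f _ _ _ s0 Hnc As0 Qs0) as [s' [Ams' [Qs' Hle]]].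
    exists s'. split; auto. apply (HN2 s' m); auto. lia. unfold m; lia. }
  assert (HL : unbounded_filter le L).
  { split; [split|].
    - intros p q [n0 Hn0] Hpq. exists n0. intros n Hn.
      exact (proj1 (proj1 (proj2_sig (a n))) p q (Hn0 n Hn) Hpq).
    - intros p q [n1 H1] [n2 H2]. destruct (GEN (CPr p q)) as [N HN].
      set (n := S (Nat.max N (Nat.max n1 n2))).
      destruct (proj2 (proj1 (proj2_sig (a n))) p q (H1 n ltac:(unfold n; lia)) (H2 n ltac:(unfold n; lia)))
        as [r [Ar [Hrp Hrq]]].
      destruct (HN n ltac:(unfold n; lia)) as [s [Ls [Hsp Hsq]]].
      { exists r. split; auto. split; auto. }
      exists s; split; auto.
    - intros [r Hr]. destruct (GEN (CUnb r)) as [N HN].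
      assert (Hex : exists s, A (S N) s /\ Qof le (CUnb r) s).
      { apply NNPP; intro Hn. apply (proj2 (proj2_sig (a (S N)))). exists r.
        intros p Ap. apply NNPP; intro Hlt. apply Hn. exists p. split; auto. }
      destruct (HN (S N) ltac:(lia) Hex) as [s [Ls Qs]]. apply Qs. apply Hr; auto. }
  set (LL := exist _ L HL : UF le).
  assert (PC : forall c, exists N, forall n, (N <= n)%nat ->
             ~ cond f (Qof le c) L (A n) /\ ~ cond f (Qof le c) (A n) L).
  { intros c. destruct (classic (exists s, L s /\ Qof le c s)) as [Hex|Hno].
    - destruct (min_witness f _ Hex) as [s0 [[Ls0 Qs0] Hmin]].
      pose proof Ls0 as [n0 Hn0]. destruct (STAB (3 * f s0)%nat) as [N2 HN2].
      exists (Nat.max n0 (S N2)). intros n Hn. split.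
      + apply not_cond_intro. intros s Ls Qs. exists s0.
        split; [apply Hn0; lia|]. split; [exact Qs0|]. apply Hmin; auto.
      + apply not_cond_intro. intros s As Qs.
        destruct (Nat.le_gt_cases (f s0) (f s)).
        * exists s0. split; [exact Ls0|]. split; [exact Qs0|lia].
        * exists s. split; [apply (HN2 s n); auto; lia|]. split; [exact Qs|lia].
    - destruct (GEN c) as [N HN]. exists (S N). intros n Hn. split.
      + intros [s [Ls [Qs _]]]. apply Hno; eauto.
      + intros [s [As [Qs _]]]. apply Hno. apply (HN n); [lia|eauto]. }
  assert (PI : forall j, exists N, forall n, (N <= n)%nat ->
             ~ Tfam le f j LL (a n) /\ ~ Tfam le f j (a n) LL).
  { intros j. destruct (classic (exists c, code f c = j)) as [[c Hcj]|Hno].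
    - destruct (PC c) as [N HN]. exists N. intros n Hn. destruct (HN n Hn) as [H1 H2].
      split; intros [c' [e' Hc']]; assert (c' = c) by (apply (code_inj f Hf); congruence);
        subst c'; auto.
    - exists 0%nat. intros n _. split; intros [c [e _]]; apply Hno; eauto. }
  assert (PK : forall K, exists N, forall n, (N <= n)%nat -> forall j, (j <= K)%nat ->
             ~ Tfam le f j LL (a n) /\ ~ Tfam le f j (a n) LL).
  { induction K as [|K IH].
    - destruct (PI 0%nat) as [N HN]. exists N. intros n Hn j Hj.
      assert (j = 0%nat) by lia. subst. auto.
    - destruct IH as [N1 H1]. destruct (PI (S K)) as [N2 H2]. exists (Nat.max N1 N2).
      intros n Hn j Hj. destruct (Nat.eq_dec j (S K)) as [->|Hne].
      + apply H2; lia.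
      + apply H1; lia. }
  exists LL. split.
  - intros eps He. destruct (wt_small eps He) as [K HK]. destruct (PK K) as [N HN].
    exists N. intros n Hn. rewrite Rabs_pos_eq by apply dist_nonneg.
    assert (dist (Tfam le f) LL (a n) < wt K).
    { apply dist_lt_iff. intros j Hj. apply (HN n Hn j Hj). } lra.
  - intros eps He. destruct (wt_small eps He) as [K HK]. destruct (PK K) as [N HN].
    exists N. intros n Hn. rewrite Rabs_pos_eq by apply dist_nonneg.
    assert (dist (Tfam le f) (a n) LL < wt K).
    { apply dist_lt_iff. intros j Hj. apply (HN n Hn j Hj). } lra.
Qed.

Definition ch {P : Type} (le : P -> P -> Prop) (p : P) : option (UF le) :=
  match excluded_middle_informative (exists G : UF le, proj1_sig G p) with
  | left H => Some (proj1_sig (constructive_indefinite_description _ H))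
  | right _ => None
  end.

Lemma ch_spec {P : Type} (le : P -> P -> Prop) p G : ch le p = Some G -> proj1_sig G p.
Proof.
  unfold ch. destruct (excluded_middle_informative _) as [H|H]; [|discriminate].
  intros E. injection E; intros <-. destruct (constructive_indefinite_description _ _); simpl; auto.
Qed.

Lemma ch_some {P : Type} (le : P -> P -> Prop) p :
  (exists G : UF le, proj1_sig G p) -> exists G, ch le p = Some G.
Proof.
  unfold ch. destruct (excluded_middle_informative _) as [H|H]; eauto. intros; contradiction.
Qed.

Lemma filter_lb {P : Type} (le : P -> P -> Prop) (Hposet : is_poset le) F m0 l :
  is_filter le F -> F m0 -> (forall i, In i l -> F i) ->
  exists m, F m /\ forall i, In i l -> le m i.
Proof.
  intros HF Hm0. induction l as [|b l IH]; intros Hl.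
  - exists m0; split; auto. intros i [].
  - destruct IH as [m [Fm Hm]]. intros i Hi; apply Hl; right; auto.
    destruct (proj2 HF b m (Hl b (or_introl eq_refl)) Fm) as [r [Fr [Hrb Hrm]]].
    exists r. split; auto. intros i [<-|Hi]; auto.
    destruct Hposet as [_ [_ Htr]]. eapply Htr; eauto.
Qed.

Lemma separable_UF {P : Type} (le : P -> P -> Prop) (Hposet : is_poset le) (f : P -> nat)
  (Hf : forall x y, f x = f y -> x = y) : separable (UF_open le).
Proof.
  set (D := fun G : UF le => (exists p, ch le p = Some G) \/ (forall p, ~ proj1_sig G p)).
  exists D. split.
  - set (g := fun G : UF le =>
      match excluded_middle_informative (exists p, ch le p = Some G) with
      | left H => S (f (proj1_sig (constructive_indefinite_description _ H)))
      | right _ => 0%nat end).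
    exists g. intros x y Dx Dy Heq. unfold g in Heq.
    destruct (excluded_middle_informative (exists p, ch le p = Some x)) as [Hx|Hx];
    destruct (excluded_middle_informative (exists p, ch le p = Some y)) as [Hy|Hy].
    + destruct (constructive_indefinite_description _ Hx) as [px Hpx].
      destruct (constructive_indefinite_description _ Hy) as [py Hpy]. simpl in Heq.
      injection Heq; intros E. apply Hf in E. subst. congruence.
    + discriminate.
    + discriminate.
    + destruct Dx as [Dx|Dx]; [contradiction|]. destruct Dy as [Dy|Dy]; [contradiction|].
      apply UF_eq. intros p; split; intros H; exfalso; [apply (Dx p)|apply (Dy p)]; auto.
  - intros U HU [x Ux]. destruct (HU x Ux) as [l [Hl Hsub]].
    destruct (classic (exists m, proj1_sig x m)) as [[m0 Hm0]|Hno].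
    + destruct (filter_lb le Hposet (proj1_sig x) m0 l (proj1 (proj2_sig x)) Hm0 Hl) as [m [xm Hm]].
      destruct (ch_some le m (ex_intro _ x xm)) as [G HG].
      exists G. split.
      * apply Hsub. intros i Hi. unfold N_set.
        exact (proj1 (proj1 (proj2_sig G)) m i (ch_spec le m G HG) (Hm i Hi)).
      * left; eauto.
    + exists x. split; auto. right. intros p Hp. apply Hno; eauto.
Qed.

Theorem theorem2p10 (P : Type) (le : P -> P -> Prop)
  (Hposet : is_poset le) (Hcount : countable_type P) :
  quasi_Polish (UF_open le).
Proof.
  destruct Hcount as [f Hf]. split.
  - apply (separable_UF le Hposet f Hf).
  - exists (dist (Tfam le f)). split; [|split].
    + split; [|split; [|split]].
      * intros; apply dist_nonneg.
      * intros x. apply dist_refl. intros n; apply Tfam_irrefl.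
      * intros x y H1 H2. apply UF_eq. intros p.
        pose proof (dist_zero _ _ _ H1) as Z1. pose proof (dist_zero _ _ _ H2) as Z2.
        split; intros Hp; apply NNPP; intros Hn.
        -- apply (Z1 (3 * f p)%nat). apply Tfam_mem; auto.
        -- apply (Z2 (3 * f p)%nat). apply Tfam_mem; auto.
      * intros x y z. apply dist_triangle. intros; eapply Tfam_split; eauto.
    + intros U. apply topo_eq; auto.
    + apply smyth; auto.
Qed.
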